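(* $\mathrm{PoTF}_{\textsc{Min-Sum}}=\Theta(n)$, i.e., the price of temporal fairness with respect to the \textsc{Min-Sum} objective is both $O(n)$ and $\Omega(n)$ as a function of the number of agents $n$.
   Context: An instance $\mathcal{I}=(N,P,T,(\mathbf{D}_i)_{i\in N})$ has agents $N=[n]$, projects $P$, timesteps $T=[\ell]$, and disapproval sets $D_{ik}\subseteq P$ for $i\in N,k\in T$. An outcome is $\mathbf{o}=(o_1,\dots,o_\ell)\in P^\ell$; $\Pi(\mathcal{I})$ is the set of all outcomes. $d_i(\mathbf{o}^{(k)})=|\{t\in[k]:o_t\in D_{it}\}|$ and $d_i(\mathbf{o})=d_i(\mathbf{o}^{(\ell)})$. A set of constraints is $\mathbf{A}=\{(t_1,\lambda_1),\dots,(t_\tau,\lambda_\tau)\}$ with $t_j\in T$, $\lambda_j\in\{0,\dots,\ell\}$, $t_1\le\dots\le t_\tau$, $\lambda_1\le\dots\le\lambda_\tau$; $\Pi_{\mathbf{A}}(\mathcal{I})$ is the set of outcomes with $\max_{i\in N}d_i(\mathbf{o}^{(t)})\le\lambda$ for all $(t,\lambda)\in\mathbf{A}$, and $\mathbf{A}$ is feasible if $\Pi_{\mathbf{A}}(\mathcal{I})\neq\emptyset$. The \textsc{Min-Sum}-value of $\mathbf{o}$ is $\sum_{i\in N}d_i(\mathbf{o})$. The price of temporal fairness is $\mathrm{PoTF}_{\textsc{Min-Sum}}=\sup_{\mathcal{I},\mathbf{A}\text{ feasible}}\frac{\min_{\mathbf{o}\in\Pi_{\mathbf{A}}(\mathcal{I})}\sum_i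 d_i(\mathbf{o})}{\min_{\mathbf{o}\in\Pi(\mathcal{I})}\sum_i d_i(\mathbf{o})}$, considered as a function of $n$ (supremum over instances with $n$ agents). *)

(* Defs.v *)
From mathcomp Require Import all_boot.
Set Implicit Arguments. Unset Strict Implicit. Unset Printing Implicit Defensive.

(* Timestep k in T = [l] = {1,...,l} is represented by the ordinal k-1 : 'I_l.
   D i t is the disapproval set of agent i at (0-based) timestep t. *)
Definition instance (n : nat) (P : finType) (l : nat) := 'I_n -> 'I_l -> {set P}.

Definition outcome (P : finType) (l : nat) := {ffun 'I_l -> P}.

Definition dis_prefix n P l (D : instance n P l) (i : 'I_n) (o : outcome P l) (k : nat) : nat :=
  #|[set t : 'I_l | (t < k) && (o t \in D i t)]|.

Definition dis n P l (D : instance n P l) (i : 'I_n) (o : outcome P l) : nat :=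
  dis_prefix D i o l.

Definition minsum n P l (D : instance n P l) (o : outcome P l) : nat :=
  \sum_(i < n) dis D i o.

(* A set of constraints A = {(t_1,l_1),...,(t_tau,l_tau)} as a sequence of pairs
   (t_j, lambda_j) with t_j in [l] (1-based), lambda_j in {0..l}, and both
   coordinates non-decreasing along the sequence. *)
Definition valid_constraints (l : nat) (A : seq (nat * nat)) : bool :=
  [&& all (fun p => (1 <= p.1 <= l) && (p.2 <= l)) A,
      sorted leq (map fst A) & sorted leq (map snd A)].

Definition satisfies n P l (D : instance n P l) (A : seq (nat * nat)) (o : outcome P l) : Prop :=
  forall p, p \in A -> forall i : 'I_n, dis_prefix D i o p.1 <= p.2.

Definition feasible n P l (D : instance n P l) (A : seq (nat * nat)) : Prop :=
  exists o : outcome P l, satisfies D A o.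

Definition is_min_minsum n P l (D : instance n P l) (Q : outcome P l -> Prop) (v : nat) : Prop :=
  (exists o, Q o /\ minsum D o = v) /\ (forall o, Q o -> v <= minsum D o).

(* Main.v *)
Require Import Defs.
From mathcomp Require Import all_boot.

Lemma card_sum (T : finType) (p : pred T) : #|[set x | p x]| = \sum_x (p x : nat).
Proof. rewrite -sum1dep_card big_mkcond; apply: eq_bigr => x _; by case: (p x). Qed.

Lemma dis_sum n P l (D : instance n P l) i o :
  dis D i o = \sum_(t < l) (o t \in D i t : nat).
Proof.
rewrite /dis /dis_prefix card_sum; apply: eq_bigr => t _; by rewrite ltn_ord.
Qed.

Lemma upper n P l (D : instance n P l) (A : seq (nat * nat)) v w :
  is_min_minsum D (satisfies D A) v ->
  is_min_minsum D (fun _ => True) w -> v <= 1 * n * w.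
Proof.
move=> [[o' [so' _]] minv] [[os [_ ws]] _].
pose S t := [exists j, os t \in D j t].
pose o2 : outcome P l := [ffun t => if S t then o' t else os t].
have sat2 : satisfies D A o2.
  move=> p pA i; apply: leq_trans (so' p pA i).
  apply: subset_leq_card; apply/subsetP => t; rewrite !inE ffunE.
  case/andP=> -> /=; case St: (S t) => // H.
  by move/negbT/existsPn: St => /(_ i); rewrite H.
apply: (leq_trans (minv _ sat2)).
rewrite mul1n /minsum.
apply: (@leq_trans (\sum_(i < n) \sum_(t < l) (S t : nat))).
  apply: leq_sum => i _; rewrite dis_sum; apply: leq_sum => t _.
  rewrite ffunE; case St: (S t); first by case: (o' t \in D i t).
  case H: (os t \in D i t) => //.
  by move/negbT/existsPn: St => /(_ i); rewrite H.
rewrite sum_nat_const card_ord leq_mul2l; apply/orP; right.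
rewrite -ws /minsum.
apply: (@leq_trans (\sum_(t < l) \sum_(j < n) (os t \in D j t : nat))).
  apply: leq_sum => t _; case St: (S t) => //.
  case/existsP: St => j Hj; rewrite (bigD1 j) //= Hj; apply: leq_addr.
rewrite exchange_big /=; apply: leq_sum => j _; by rewrite dis_sum.
Qed.

Definition Dex (n : nat) : instance n bool 2 := fun i t =>
  if val t == 0 then (if val i == 0 then setT else set0)
  else (if val i == 0 then [set true] else [set false]).

Lemma dis_ex n i (o : outcome bool 2) :
  dis (Dex n) i o = if val i == 0 then 1 + o (inord 1) else ~~ o (inord 1).
Proof.
rewrite dis_sum !big_ord_recl big_ord0 /Dex /=.
have -> : (lift ord0 ord0 : 'I_2) = inord 1 by apply: val_inj; rewrite /= inordK.
case: (val i == 0); rewrite ?inE; case: (o (inord 1)); by case: (o ord0).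
Qed.

Lemma minsum_ex n (o : outcome bool 2) :
  minsum (Dex n.+1) o = 1 + o (inord 1) + n * ~~ o (inord 1).
Proof.
rewrite /minsum big_ord_recl dis_ex /=.
congr (_ + _).
rewrite -[X in X * _]card_ord -sum_nat_const; apply: eq_bigr => i _.
by rewrite dis_ex.
Qed.

Theorem theorem7 :
  (exists C : nat,
     forall (n : nat) (P : finType) (l : nat) (D : instance n P l) (A : seq (nat * nat)),
       valid_constraints l A -> feasible D A ->
       forall v w : nat,
         is_min_minsum D (satisfies D A) v ->
         is_min_minsum D (fun _ => True) w ->
         v <= C * n * w)
  /\
  (exists (c N : nat), 0 < c /\
     forall n : nat, N <= n ->
       exists (P : finType) (l : nat) (D : instance n P l) (A : seq (nat * nat)),
         valid_constraints l A /\ feasible D A /\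
         exists v w : nat,
           is_min_minsum D (satisfies D A) v /\
           is_min_minsum D (fun _ => True) w /\
           0 < w /\ n * w <= c * v).
Proof.
split.
  exists 1 => n P l D A _ _ v w; exact: upper.
exists 2, 2; split => // n Hn.
case: n Hn => [|n] // Hn.
exists bool, 2, (Dex n.+1), [:: (2, 1)].
have sat0 : satisfies (Dex n.+1) [:: (2, 1)] [ffun => false].
  move=> p; rewrite inE => /eqP -> i /=.
  rewrite -/(dis (Dex n.+1) i _) dis_ex ffunE; by case: (val i == 0).
split => //; split; first by exists [ffun => false].
exists n.+1, 2; split; [split|split; [split|split => //]].
- exists [ffun => false]; split => //.
  by rewrite minsum_ex ffunE /= muln1 addn0 add1n.
- move=> o so; rewrite minsum_ex.
  have := so (2, 1) (mem_head _ _) ord0.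
  rewrite -/(dis (Dex n.+1) ord0 _) dis_ex /=.
  by case: (o (inord 1)) => //=; rewrite ?muln1 ?addn0 ?add1n.
- by exists [ffun => true]; split => //; rewrite minsum_ex ffunE /= muln0.
- move=> o _; rewrite minsum_ex.
  case: (o (inord 1)) => //=; rewrite ?muln1 ?addn0 ?add1n; exact: Hn.
- by rewrite mulnC.
Qed.
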